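(* Let $f(x)=\frac1n\sum_{i=1}^n f_i(x)$ with $f_i:\mathbb{R}^d\to\mathbb{R}$, where each $f_i$ is $L$-smooth and $\mu$-strongly convex, and let $x^*$ be the minimizer of $f$. Run No Full Grad SARAH (described in the context) with stepsize $\gamma\le\frac1{20L(n+1)}$. Then, to reach $\varepsilon$-accuracy, where $\varepsilon=f(x_{S+1}^0)-f(x^* )$, the method needs $\mathcal{O}\left(\frac{nL}{\mu}\log\frac1\varepsilon\right)$ iterations and oracle calls.
   Context: No Full Grad SARAH: input $x_0^0\in\mathbb{R}^d$, $v_0=0$, stepsize $\gamma>0$. For epochs $s=0,1,\dots,S$: choose a permutation $\pi_s^1,\dots,\pi_s^n$ of $\{1,\dots,n\}$ (by any shuffling rule); set $\tilde v_s^1=0$, $v_s^0=v_s$, $x_s^1=x_s^0-\gamma v_s^0$; for $t=1,\dots,n$ set $\tilde v_s^{t+1}=\frac{t-1}{t}\tilde v_s^t+\frac1t\nabla f_{\pi_s^t}(x_s^t)$, $v_s^t=\frac1n\big(\nabla f_{\pi_s^t}(x_s^t)-\nabla f_{\pi_s^t}(x_s^{t-1})\big)+v_s^{t-1}$, $x_s^{t+1}=x_s^t-\gamma v_s^t$; then set $x_{s+1}^0=x_s^{n+1}$ and $v_{s+1}=\tilde v_s^{n+1}$. A function is $\mu$-strongly convex if $f_i(y)\ge f_i(x)+\langle\nabla f_i(x),y-x\rangle+\frac\mu2\|y-x\|^2$. An oracle call is one evaluation of a single $\nabla f_i$; an iteration is one inner step. The $\mathcal{O}(\cdot)$ hides absolute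 constants and the dependence on the initial gap. *)

(* Defs.v *)
From HB Require Import structures.
From mathcomp Require Import all_boot all_order all_algebra all_fingroup.
From mathcomp Require Import all_classical all_reals all_analysis.
Set Implicit Arguments. Unset Strict Implicit. Unset Printing Implicit Defensive.
Import Order.TTheory GRing.Theory Num.Theory.
Import numFieldNormedType.Exports.
Local Open Scope ring_scope.

Section NFGSarah.
Variables (R : realType) (d n : nat).
Notation vec := 'rV[R]_d.

Definition dotv (u v : vec) : R := \sum_(j < d) u 0 j * v 0 j.
Definition enorm (u : vec) : R := Num.sqrt (dotv u u).

Definition favg (f : 'I_n -> vec -> R) (x : vec) : R :=
  n%:R^-1 * \sum_(i < n) f i x.

(* Inner-loop state at step t: (x_s^t, x_s^{t-1}, v_s^{t-1}, tilde v_s^t). *)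
Definition inner_state := (vec * vec * vec * vec)%type.

(* One inner step t = j+1 (j : 'I_n is the 0-based position), with
   component index p = pi_s^t and gradient oracle g. *)
Definition inner_step (gamma : R) (g : 'I_n -> vec -> vec) (p : 'I_n)
    (t : nat) (st : inner_state) : inner_state :=
  let: (x, xp, vp, tv) := st in
  let gt := g p x in
  let tv' := ((t%:R - 1) / t%:R) *: tv + t%:R^-1 *: gt in
  let v := n%:R^-1 *: (gt - g p xp) + vp in
  (x - gamma *: v, x, v, tv').

(* One epoch s of No Full Grad SARAH: input (x_s^0, v_s), permutation pi_s;
   output (x_{s+1}^0, v_{s+1}) = (x_s^{n+1}, tilde v_s^{n+1}). *)
Definition epoch (gamma : R) (g : 'I_n -> vec -> vec) (pi : {perm 'I_n})
    (xv : vec * vec) : vec * vec :=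
  let: (x0, v) := xv in
  let init : inner_state := (x0 - gamma *: v, x0, v, 0) in
  let fin := foldl (fun st (j : 'I_n) => inner_step gamma g (pi j) j.+1 st)
                   init (enum 'I_n) in
  let: (x, _, _, tv) := fin in (x, tv).

Fixpoint nfg_sarah (gamma : R) (g : 'I_n -> vec -> vec)
    (pi : nat -> {perm 'I_n}) (x0 : vec) (s : nat) : vec * vec :=
  match s with
  | 0 => (x0, 0)
  | s'.+1 => epoch gamma g (pi s') (nfg_sarah gamma g pi x0 s')
  end.

(* Number of inner iterations and of oracle calls (evaluations of a single
   grad f_i) performed by epochs 0..S: each inner step evaluates
   grad f_{pi_s^t}(x_s^t) and grad f_{pi_s^t}(x_s^{t-1}). *)
Definition iterations (S : nat) : nat := S.+1 * n.
Definition oracle_calls (S : nat) : nat := 2 * (S.+1 * n).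

Definition is_gradient (f : 'I_n -> vec -> R) (g : 'I_n -> vec -> vec) :=
  forall i x, differentiable (f i) x /\ forall v, 'd (f i) x v = dotv (g i x) v.

Definition L_smooth (g : 'I_n -> vec -> vec) (L : R) :=
  forall i x y, enorm (g i x - g i y) <= L * enorm (x - y).

Definition strongly_convex (f : 'I_n -> vec -> R) (g : 'I_n -> vec -> vec)
    (mu : R) :=
  forall i x y, f i x + dotv (g i x) (y - x) + mu / 2 * enorm (y - x) ^+ 2
                <= f i y.

End NFGSarah.

(* Main.v *)
Require Import Defs.
From HB Require Import structures.
From mathcomp Require Import all_boot all_order all_algebra all_fingroup.
From mathcomp Require Import all_classical all_reals all_analysis.
From mathcomp Require Import ring lra.
Import Order.TTheory GRing.Theory Num.Theory.
Set Implicit Arguments. Unset Strict Implicit. Unset Printing Implicit Defensive.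
Local Open Scope ring_scope.

Section Vec.
Variables (R : realType) (d : nat).
Notation vec := 'rV[R]_d.
Implicit Types u v w : vec.

Lemma dotvC u v : dotv u v = dotv v u.
Proof. by apply: eq_bigr => j _; rewrite mulrC. Qed.

Lemma dotvDl u w v : dotv (u + w) v = dotv u v + dotv w v.
Proof. by rewrite /dotv -big_split; apply: eq_bigr => j _; rewrite mxE mulrDl. Qed.

Lemma dotvZl c u v : dotv (c *: u) v = c * dotv u v.
Proof. by rewrite /dotv mulr_sumr; apply: eq_bigr => j _; rewrite mxE mulrA. Qed.

Lemma dotvNl u v : dotv (- u) v = - dotv u v.
Proof. by rewrite -scaleN1r dotvZl mulN1r. Qed.

Lemma dotvBl u w v : dotv (u - w) v = dotv u v - dotv w v.
Proof. by rewrite dotvDl dotvNl. Qed.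

Lemma dotvDr u w v : dotv v (u + w) = dotv v u + dotv v w.
Proof. by rewrite dotvC dotvDl !(dotvC v). Qed.

Lemma dotvZr c u v : dotv v (c *: u) = c * dotv v u.
Proof. by rewrite dotvC dotvZl dotvC. Qed.

Lemma dotvBr u w v : dotv v (u - w) = dotv v u - dotv v w.
Proof. by rewrite dotvC dotvBl !(dotvC v). Qed.

Lemma dotv0l v : dotv 0 v = 0.
Proof. by rewrite /dotv big1 // => j _; rewrite mxE mul0r. Qed.

Lemma dotv_suml (I : Type) (r : seq I) (P : pred I) (F : I -> vec) v :
  dotv (\sum_(i <- r | P i) F i) v = \sum_(i <- r | P i) dotv (F i) v.
Proof.
apply: (big_ind2 (fun a b => dotv a v = b)) => //; first exact: dotv0l.
by move=> x1 x2 y1 y2 <- <-; rewrite dotvDl.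
Qed.

Lemma dotv_ge0 u : 0 <= dotv u u.
Proof. by apply: sumr_ge0 => j _; rewrite -expr2 sqr_ge0. Qed.

Lemma enorm_ge0 u : 0 <= enorm u.
Proof. exact: sqrtr_ge0. Qed.

Lemma enorm_sq u : enorm u ^+ 2 = dotv u u.
Proof. by rewrite /enorm sqr_sqrtr // dotv_ge0. Qed.

Lemma sqr_ge0' u (j : 'I_d) : 0 <= u 0 j * u 0 j.
Proof. by rewrite -expr2 sqr_ge0. Qed.

Lemma enorm0_eq u : enorm u = 0 -> forall v, dotv u v = 0.
Proof.
move=> h v.
have h0 : dotv u u = 0 by rewrite -enorm_sq h expr0n.
have hj : forall j, u 0 j = 0.
  move=> j; have hz := @psumr_eq0P R _ xpredT (fun j => u 0 j * u 0 j).
  have /eqP := hz (fun i _ => sqr_ge0' u i) h0 j isT.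
  by rewrite mulf_eq0 orbb => /eqP.
by rewrite /dotv big1 // => j _; rewrite hj mul0r.
Qed.

Lemma cauchy_schwarz u v : dotv u v <= enorm u * enorm v.
Proof.
have [A0|] := eqVneq (enorm u) 0; first by rewrite (enorm0_eq A0) A0 mul0r.
have [B0|] := eqVneq (enorm v) 0.
  by rewrite dotvC (enorm0_eq B0) B0 mulr0.
move=> nB nA.
have Ap : 0 < enorm u by rewrite lt_neqAle eq_sym nA enorm_ge0.
have Bp : 0 < enorm v by rewrite lt_neqAle eq_sym nB enorm_ge0.
have h := dotv_ge0 (enorm v *: u - enorm u *: v).
rewrite !dotvBl !dotvBr !dotvZl !dotvZr -!enorm_sq (dotvC v u) in h.
set A := enorm u in h Ap *; set B := enorm v in h Bp *; set x := dotv u v in h *.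
have hAB : 0 < A * B by apply: mulr_gt0.
nra.
Qed.

Lemma enormZ c u : enorm (c *: u) = `|c| * enorm u.
Proof.
rewrite /enorm dotvZl dotvZr mulrA -expr2 sqrtrM ?sqr_ge0 //.
by rewrite sqrtr_sqr.
Qed.

Lemma enormN u : enorm (- u) = enorm u.
Proof. by rewrite -scaleN1r enormZ normrN normr1 mul1r. Qed.

Lemma enormD u v : enorm (u + v) <= enorm u + enorm v.
Proof.
rewrite {1}/enorm -(ger0_norm (addr_ge0 (enorm_ge0 u) (enorm_ge0 v))) -sqrtr_sqr.
rewrite ler_sqrt ?sqr_ge0 // dotvDl !dotvDr -!enorm_sq (dotvC v u).
have := cauchy_schwarz u v; nra.
Qed.

Lemma enormB u v : enorm (u - v) <= enorm u + enorm v.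
Proof. by rewrite -(enormN v) enormD. Qed.

Lemma enorm0 : enorm (0 : vec) = 0.
Proof. by rewrite -(scale0r (0 : vec)) enormZ normr0 mul0r. Qed.

Lemma enorm_sum (I : Type) (r : seq I) (P : pred I) (F : I -> vec) :
  enorm (\sum_(i <- r | P i) F i) <= \sum_(i <- r | P i) enorm (F i).
Proof.
apply: (big_ind2 (fun a b => enorm a <= b)); first by rewrite enorm0.
  by move=> x1 x2 y1 y2 h1 h2; apply: le_trans (enormD _ _) (lerD h1 h2).
by [].
Qed.

End Vec.


Section Avg.
Variables (R : realType) (d n : nat).
Notation vec := 'rV[R]_d.
Variables (f : 'I_n -> vec -> R) (g : 'I_n -> vec -> vec) (L mu : R).
Hypothesis (hn : (0 < n)%N).

Definition Gf (x : vec) : vec := n%:R^-1 *: \sum_(i < n) g i x.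

Lemma n_neq0 : (n%:R : R) != 0.
Proof. by rewrite pnatr_eq0 -lt0n. Qed.

Lemma avg_const (c : R) : n%:R^-1 * \sum_(i < n) c = c.
Proof. by rewrite sumr_const card_ord -[c *+ n]mulr_natl mulrA mulVf ?n_neq0 // mul1r. Qed.

Lemma avg_le (F1 F2 : 'I_n -> R) : (forall i, F1 i <= F2 i) ->
  n%:R^-1 * \sum_(i < n) F1 i <= n%:R^-1 * \sum_(i < n) F2 i.
Proof.
move=> h; rewrite ler_pM2l ?invr_gt0 ?ltr0n //.
by apply: ler_sum => i _; apply: h.
Qed.

Lemma dotv_Gf x w : dotv (Gf x) w = n%:R^-1 * \sum_(i < n) dotv (g i x) w.
Proof. by rewrite /Gf dotvZl dotv_suml. Qed.

Lemma avg3 (A B : 'I_n -> R) (c : R) :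
  n%:R^-1 * \sum_(i < n) A i + n%:R^-1 * \sum_(i < n) B i + c =
  n%:R^-1 * \sum_(i < n) (A i + B i + c).
Proof. by rewrite !big_split /= !mulrDr avg_const. Qed.

Lemma favg_SC x y : strongly_convex f g mu ->
  favg f x + dotv (Gf x) (y - x) + mu / 2 * enorm (y - x) ^+ 2 <= favg f y.
Proof.
move=> hsc; rewrite dotv_Gf /favg avg3; apply: avg_le => i; exact: hsc.
Qed.

Lemma favg_up x y : 0 <= mu -> strongly_convex f g mu -> L_smooth g L ->
  favg f y <= favg f x + dotv (Gf x) (y - x) + L * enorm (y - x) ^+ 2.
Proof.
move=> hmu hsc hL; rewrite dotv_Gf /favg avg3; apply: avg_le => i.
have h1 := hsc i y x.
have h2 : 0 <= mu / 2 * enorm (x - y) ^+ 2 by apply: mulr_ge0; [lra| exact: sqr_ge0].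
have h3 : dotv (g i y) (x - y) = - dotv (g i x) (y - x) - dotv (g i y - g i x) (y - x).
  rewrite dotvBl -(opprB y x) -scaleN1r !dotvZr (dotvC (g i y)) (dotvC (g i x)).
  by rewrite !mulN1r; lra.
have h4 := cauchy_schwarz (g i y - g i x) (y - x).
have h5 := hL i y x.
have h6 : enorm (y - x) = enorm (x - y) by rewrite -enormN opprB.
have h7 := enorm_ge0 (y - x).
rewrite h3 in h1.
have h8 : enorm (g i y - g i x) * enorm (y - x) <= L * enorm (y - x) ^+ 2.
  by rewrite expr2 mulrA ler_wpM2r.
lra.
Qed.

End Avg.

Section Avg2.
Variables (R : realType) (d n : nat).
Notation vec := 'rV[R]_d.
Variables (g : 'I_n -> vec -> vec) (L : R).
Hypothesis (hn : (0 < n)%N).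

Lemma Gf_lip x y : L_smooth g L -> enorm (Gf g x - Gf g y) <= L * enorm (x - y).
Proof.
move=> hL; rewrite /Gf -scalerBr -sumrB enormZ ger0_norm ?invr_ge0 ?ler0n //.
apply: le_trans (_ : n%:R^-1 * \sum_(i < n) (L * enorm (x - y)) <= _); last first.
  by rewrite avg_const.
rewrite ler_pM2l ?invr_gt0 ?ltr0n //.
apply: le_trans (enorm_sum _ _ _) _.
by apply: ler_sum => i _; apply: hL.
Qed.

Lemma sum_perm_Gf (pi : {perm 'I_n}) x :
  \sum_(j <- enum 'I_n) g (pi j) x = n%:R *: Gf g x.
Proof.
rewrite big_enum /= /Gf scalerA divff ?n_neq0 // scale1r.
rewrite [RHS](reindex_inj (@perm_inj _ pi)). by apply: eq_bigl => i.
Qed.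

End Avg2.


Section Epoch.
Variables (R : realType) (d n : nat).
Notation vec := 'rV[R]_d.
Variables (g : 'I_n -> vec -> vec) (L gam : R) (pi : {perm 'I_n}) (X V : vec).
Hypotheses (hn : (0 < n)%N) (hL0 : 0 < L) (hL : L_smooth g L)
  (hgam : gam = (20 * L * (n%:R + 1))^-1).

Let G := Gf g X.
Let a := enorm G.
Let e := enorm (V - G).
Let rho := (40 * e + a) / 39.

Lemma nR_ge1 : 1 <= (n%:R : R).
Proof. by rewrite ler1n. Qed.

Lemma gam_pos : 0 < gam.
Proof.
rewrite hgam invr_gt0; have h1 := nR_ge1.
apply: mulr_gt0; [apply: mulr_gt0 => //; lra | lra].
Qed.

Lemma Lgam : L * gam * (n%:R + 1) = 1 / 20.
Proof.
rewrite hgam; have := nR_ge1 => h1.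
field; apply/andP; split; [lra|]; by rewrite lt0r_neq0.
Qed.

Lemma a_ge0 : 0 <= a. Proof. exact: enorm_ge0. Qed.
Lemma e_ge0 : 0 <= e. Proof. exact: enorm_ge0. Qed.

Lemma rho_ge0 : 0 <= rho.
Proof. rewrite /rho; have := a_ge0; have := e_ge0; lra. Qed.

Lemma rho_fix : e + L * gam * (a + rho) <= rho.
Proof.
have h1 := Lgam; have h2 := nR_ge1; have h3 := gam_pos.
have h4 : L * gam <= 1 / 40.
  have : L * gam * 2 <= L * gam * (n%:R + 1).
    by rewrite ler_pM2l ?mulr_gt0 //; lra.
  lra.
have h5 : 0 <= a + rho by have := a_ge0; have := rho_ge0; lra.
have h6 : L * gam * (a + rho) <= 1/40 * (a + rho) by rewrite ler_wpM2r.
rewrite /rho in h6 *; lra.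
Qed.

Definition step (st : inner_state R d) (j : 'I_n) :=
  inner_step gam g (pi j) j.+1 st.

Lemma inv_loop (l : seq 'I_n) :
  map val l = iota 0 (size l) -> (size l <= n)%N ->
  forall x xp vp tv,
  foldl step (X - gam *: V, X, V, 0) l = (x, xp, vp, tv) ->
  [/\ enorm (vp - G) <= e + (size l)%:R * (L * gam * (a + rho) / n%:R),
      enorm (xp - X + (gam * (size l)%:R) *: G) <= gam * (size l)%:R * rho,
      x = xp - gam *: vp &
      enorm ((size l)%:R *: tv - \sum_(j <- l) g (pi j) X)
        <= (size l)%:R * (L * gam * n%:R * (a + rho))].
Proof.
elim/last_ind: l => [|l j IH] /=.
  move=> _ _ x xp vp tv [<- <- <- <-].
  rewrite !mul0r !mulr0 !scale0r !addr0 subrr big_nil subr0 enorm0.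
  by split; rewrite ?mul0r // lexx.
rewrite size_rcons map_rcons => hmap hsize x xp vp tv.
have [hmap' hj] : map val l = iota 0 (size l) /\ val j = size l.
  move: hmap; rewrite -addn1 iotaD add0n cats1 => /eqP.
  by rewrite eqseq_rcons => /andP [/eqP h1 /eqP h2]; split.
rewrite foldl_rcons.
case E: (foldl step _ l) => [[[x' xp'] vp'] tv'].
have [H1 H2 H3 H4] := IH hmap' (ltnW hsize) _ _ _ _ E.
rewrite /step /inner_step hj => -[<- <- <- <-].
rewrite big_rcons /= -natr1.
set mR := (size l)%:R in H1 H2 H4 *.
set K := L * gam * (a + rho) in H1 *.
set p := pi j.
have hgam0 := gam_pos.
have hmR0 : 0 <= mR by rewrite ler0n.
have hmn : mR + 1 <= n%:R by rewrite natr1 ler_nat.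
have hnpos : 0 < (n%:R : R) by rewrite ltr0n.
have ha0 := a_ge0; have hr0 := rho_ge0; have hfix := rho_fix.
rewrite -/K in hfix.
have hK0 : 0 <= K.
  rewrite /K; apply: mulr_ge0; [apply: mulr_ge0; apply: ltW | lra] => //.
have hk1 : mR * (K / n%:R) + K / n%:R <= K.
  have -> : mR * (K / n%:R) + K / n%:R = (mR + 1) * (K / n%:R) by ring.
  apply: le_trans (_ : n%:R * (K / n%:R) <= K).
    by rewrite ler_wpM2r // divr_ge0 // ltW.
  by rewrite mulrC divfK // lt0r_neq0.
have hvpG : enorm (vp' - G) <= rho.
  have h0 : 0 <= K / n%:R by rewrite divr_ge0 // ltW.
  lra.
have hvp : enorm vp' <= a + rho.
  have -> : vp' = G + (vp' - G) by rewrite addrC subrK.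
  by apply: le_trans (enormD _ _) _; rewrite lerD2l.
have hxx : enorm (x' - xp') = gam * enorm vp'.
  by rewrite H3 addrAC subrr add0r enormN enormZ ger0_norm // ltW.
have hinc : enorm (n%:R^-1 *: (g p x' - g p xp')) <= K / n%:R.
  rewrite enormZ ger0_norm ?invr_ge0 ?ler0n // mulrC ler_pM2r ?invr_gt0 //.
  apply: le_trans (hL _ _ _) _; rewrite hxx /K mulrA.
  by rewrite ler_wpM2l // mulr_ge0 // ltW.
have G2 : enorm (x' - X + (gam * (mR + 1)) *: G) <= gam * (mR + 1) * rho.
  have -> : x' - X + (gam * (mR + 1)) *: G =
      (xp' - X + (gam * mR) *: G) - gam *: (vp' - G).
    by rewrite H3; apply/rowP => k; rewrite !mxE; lra.
  apply: le_trans (enormB _ _) _.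
  rewrite enormZ ger0_norm; last exact: ltW.
  have : gam * enorm (vp' - G) <= gam * rho by rewrite ler_wpM2l // ltW.
  have -> : gam * (mR + 1) * rho = gam * mR * rho + gam * rho by ring.
  lra.
split => //.
- rewrite -addrA; apply: le_trans (enormD _ _) _.
  rewrite mulrDl mul1r; lra.
- have hc : (mR + 1) * ((mR + 1 - 1) / (mR + 1)) = mR.
    by rewrite addrK mulrC divfK // lt0r_neq0 //; lra.
  have hc' : (mR + 1) * (mR + 1)^-1 = 1 by rewrite divff // lt0r_neq0 //; lra.
  rewrite scalerDr !scalerA hc hc' scale1r.
  set S := \sum_(j0 <- l) g (pi j0) X.
  have -> : mR *: tv' + g p x' - (S + g p X) = (mR *: tv' - S) + (g p x' - g p X).
    by apply/rowP => k; rewrite !mxE; lra.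
  apply: le_trans (enormD _ _) _.
  have hx'X : enorm (x' - X) <= gam * n%:R * (a + rho).
    have -> : x' - X = (x' - X + (gam * (mR + 1)) *: G) - (gam * (mR + 1)) *: G.
      by rewrite addrK.
    apply: le_trans (enormB _ _) _.
    rewrite enormZ ger0_norm; last by apply: mulr_ge0; lra.
    have : gam * (mR + 1) * (a + rho) <= gam * n%:R * (a + rho).
      by rewrite ler_wpM2r ?ler_wpM2l //; [lra| lra].
    have -> : gam * (mR + 1) * (a + rho) = gam * (mR + 1) * rho + gam * (mR + 1) * a by ring.
    rewrite -/a; lra.
  have h6 : enorm (g p x' - g p X) <= L * gam * n%:R * (a + rho).
    apply: le_trans (hL _ _ _) _.
    by rewrite -!mulrA; apply: ler_wpM2l; [exact: ltW | rewrite mulrA].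
  rewrite mulrDl mul1r; lra.
Qed.

Lemma epoch_bound X' V' : epoch gam g pi (X, V) = (X', V') ->
  enorm (X' - X + (gam * (n%:R + 1)) *: G) <= gam * (n%:R + 1) * rho /\
  enorm (V' - Gf g X') <= (a + rho) / 10.
Proof.
rewrite /epoch.
have := @inv_loop (enum 'I_n).
rewrite val_enum_ord size_enum_ord => /(_ erefl (leqnn n)).
case E: (foldl _ _ _) => [[[x xp] vp] tv] /(_ _ _ _ _ erefl) [H1 H2 H3 H4] [<- <-].
have hgam0 := gam_pos.
have hnpos : 0 < (n%:R : R) by rewrite ltr0n.
have ha0 := a_ge0; have hr0 := rho_ge0; have hfix := rho_fix; have hLg := Lgam.
set nR := (n%:R : R) in H1 H2 H4 hnpos hLg *.
have hvpG : enorm (vp - G) <= rho.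
  have h0 : nR * (L * gam * (a + rho) / nR) = L * gam * (a + rho).
    by rewrite mulrC divfK // lt0r_neq0.
  lra.
have G2 : enorm (x - X + (gam * (nR + 1)) *: G) <= gam * (nR + 1) * rho.
  have -> : x - X + (gam * (nR + 1)) *: G =
      (xp - X + (gam * nR) *: G) - gam *: (vp - G).
    by rewrite H3; apply/rowP => k; rewrite !mxE; lra.
  apply: le_trans (enormB _ _) _.
  rewrite enormZ ger0_norm; last exact: ltW.
  have : gam * enorm (vp - G) <= gam * rho by rewrite ler_wpM2l // ltW.
  have -> : gam * (nR + 1) * rho = gam * nR * rho + gam * rho by ring.
  lra.
split => //.
have hxX : enorm (x - X) <= gam * (nR + 1) * (a + rho).
  have -> : x - X = (x - X + (gam * (nR + 1)) *: G) - (gam * (nR + 1)) *: G.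
    by rewrite addrK.
  apply: le_trans (enormB _ _) _.
  rewrite enormZ ger0_norm; last by apply: mulr_ge0; lra.
  have -> : gam * (nR + 1) * (a + rho) = gam * (nR + 1) * rho + gam * (nR + 1) * a by ring.
  rewrite -/a; lra.
have hS := sum_perm_Gf g hn pi X.
rewrite -/G -/nR in hS; rewrite hS in H4.
have htv : enorm (tv - G) <= L * gam * nR * (a + rho).
  move: H4; rewrite -scalerBr enormZ ger0_norm; last exact: ltW.
  by rewrite ler_pM2l.
have h2 : L * gam * nR * (a + rho) <= (a + rho) / 20.
  have -> : (a + rho) / 20 = L * gam * (nR + 1) * (a + rho) by rewrite hLg; ring.
  apply: ler_wpM2r; first lra.
  apply: ler_wpM2l; [apply: mulr_ge0; apply: ltW => // | lra].
have hG : enorm (G - Gf g x) <= (a + rho) / 20.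
  apply: le_trans (Gf_lip hn _ _ hL) _.
  rewrite -enormN opprB.
  have -> : (a + rho) / 20 = L * (gam * (nR + 1) * (a + rho)) by rewrite !mulrA hLg; ring.
  by rewrite ler_wpM2l // ltW.
have -> : tv - Gf g x = (tv - G) + (G - Gf g x) by rewrite addrA subrK.
apply: le_trans (enormD _ _) _; lra.
Qed.

End Epoch.


Lemma Qneg (R : realType) (a e : R) : 0 <= a -> 0 <= e ->
  a * ((40 * e + a) / 39) - a ^+ 2 / 2 + 9 / 100 * (a + (40 * e + a) / 39) ^+ 2
    - 18 / 5 * e ^+ 2 <= 0.
Proof. move=> ha he; nra. Qed.

Section Contract.
Variables (R : realType) (d n : nat).
Notation vec := 'rV[R]_d.
Variables (f : 'I_n -> vec -> R) (g : 'I_n -> vec -> vec) (L mu gam : R) (xstar : vec).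
Hypotheses (hn : (0 < n)%N) (hL0 : 0 < L) (hmu0 : 0 < mu) (hmu2 : mu <= 2 * L)
  (hL : L_smooth g L) (hsc : strongly_convex f g mu)
  (hmin : forall x, favg f xstar <= favg f x)
  (hgam : gam = (20 * L * (n%:R + 1))^-1).

Definition Phi (xv : vec * vec) :=
  favg f xv.1 - favg f xstar + 4 * (gam * (n%:R + 1)) * enorm (xv.2 - Gf g xv.1) ^+ 2.

Lemma PL X : 2 * mu * (favg f X - favg f xstar) <= enorm (Gf g X) ^+ 2.
Proof.
have h := favg_SC hn X xstar hsc.
have hcs := cauchy_schwarz (- Gf g X) (xstar - X).
rewrite dotvNl enormN in hcs.
have hr := enorm_ge0 (xstar - X).
have ha := enorm_ge0 (Gf g X).
set A := enorm (Gf g X) in hcs ha *; set r := enorm (xstar - X) in h hcs hr.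
set dt := dotv (Gf g X) (xstar - X) in h hcs.
have hsq : 0 <= (A - mu * r) ^+ 2 by apply: sqr_ge0.
have hm : 0 <= mu by apply: ltW.
nra.
Qed.

Lemma contract (pi : {perm 'I_n}) X V :
  Phi (epoch gam g pi (X, V)) <= (1 - gam * (n%:R + 1) * mu) * Phi (X, V).
Proof.
case E: (epoch gam g pi (X, V)) => [X' V'].
have [B1 B2] := epoch_bound hn hL0 hL hgam E.
rewrite /Phi /=.
have hLD : L * (gam * (n%:R + 1)) = 1 / 20 by rewrite mulrA; exact: Lgam hn hL0 hgam.
have hg0 := gam_pos hn hL0 hgam.
set D := gam * (n%:R + 1) in B1 hLD *.
have hD0 : 0 < D by rewrite /D; apply: mulr_gt0 => //; rewrite ltr_pwDr ?ler0n.
set G := Gf g X in B1 B2 *.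
set a := enorm G in B1 B2 *.
set e := enorm (V - G) in B1 B2 *.
have ha0 : 0 <= a := enorm_ge0 _.
have he0 : 0 <= e := enorm_ge0 _.
set rho := (40 * e + a) / 39 in B1 B2 *.
have hr0 : 0 <= rho by rewrite /rho; lra.
set W := X' - X + D *: G in B1.
have hup := favg_up hn X X' (ltW hmu0) hsc hL.
have hXX : X' - X = W - D *: G by rewrite /W addrK.
rewrite {1}hXX dotvBr dotvZr -enorm_sq -/G -/a in hup.
have h2 : dotv G W <= a * (D * rho).
  apply: le_trans (cauchy_schwarz _ _) _; by rewrite ler_wpM2l.
have hn1 : enorm (X' - X) <= D * (a + rho).
  rewrite hXX; apply: le_trans (enormB _ _) _.
  rewrite enormZ ger0_norm -/a; last exact: ltW.
  lra.
have h3 : L * enorm (X' - X) ^+ 2 <= D * (a + rho) ^+ 2 / 20.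
  have : enorm (X' - X) ^+ 2 <= (D * (a + rho)) ^+ 2.
    apply: lerXn2r => //; rewrite nnegrE ?enorm_ge0 //.
    by apply: mulr_ge0; [apply: ltW | lra].
  move=> h; have := ler_wpM2l (ltW hL0) h.
  have -> : L * (D * (a + rho)) ^+ 2 = (L * D) * D * (a + rho) ^+ 2 by ring.
  by rewrite hLD; lra.
set e' := enorm (V' - Gf g X') in B2 *.
have he'0 : 0 <= e' := enorm_ge0 _.
have h4 : e' ^+ 2 <= (a + rho) ^+ 2 / 100.
  have : e' ^+ 2 <= ((a + rho) / 10) ^+ 2.
    by apply: lerXn2r => //; rewrite nnegrE //; lra.
  have -> : ((a + rho) / 10) ^+ 2 = (a + rho) ^+ 2 / 100 by field.
  by [].
have h4' : 4 * D * e' ^+ 2 <= 4 * D * ((a + rho) ^+ 2 / 100).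
  by rewrite ler_wpM2l // mulr_ge0 //; lra.
have hPL := PL X; rewrite -/G -/a in hPL.
have h5 : D * mu * (favg f X - favg f xstar) <= D * a ^+ 2 / 2.
  have := ler_wpM2l (ltW hD0) hPL.
  have -> : D * (2 * mu * (favg f X - favg f xstar)) = 2 * (D * mu * (favg f X - favg f xstar)) by ring.
  lra.
have hDmu : D * mu <= 1 / 10.
  have : D * mu <= D * (2 * L) by rewrite ler_wpM2l // ltW.
  have -> : D * (2 * L) = 2 * (L * D) by ring.
  lra.
have h6 : (D * mu) * (4 * D * e ^+ 2) <= 1 / 10 * (4 * D * e ^+ 2).
  by rewrite ler_wpM2r // mulr_ge0 ?sqr_ge0 //; lra.
have h7 := Qneg ha0 he0; rewrite -/rho in h7.
have h7' : D * (a * rho - a ^+ 2 / 2 + 9 / 100 * (a + rho) ^+ 2 - 18 / 5 * e ^+ 2) <= 0.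
  by rewrite pmulr_rle0.
have hF' := hmin X'.
have hF0 := hmin X.
lra.
Qed.

Lemma kappa_le : gam * (n%:R + 1) * mu <= 1 / 10.
Proof.
have hLD : L * (gam * (n%:R + 1)) = 1 / 20 by rewrite mulrA; exact: Lgam hn hL0 hgam.
have hg0 := gam_pos hn hL0 hgam.
have hD0 : 0 < gam * (n%:R + 1) by apply: mulr_gt0 => //; rewrite ltr_pwDr ?ler0n.
have : gam * (n%:R + 1) * mu <= gam * (n%:R + 1) * (2 * L) by rewrite ler_wpM2l // ltW.
have -> : gam * (n%:R + 1) * (2 * L) = 2 * (L * (gam * (n%:R + 1))) by ring.
lra.
Qed.

Lemma iter_bound x0 (pi : nat -> {perm 'I_n}) S :
  Phi (nfg_sarah gam g pi x0 S) <= (1 - gam * (n%:R + 1) * mu) ^+ S * Phi (x0, 0).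
Proof.
have hk := kappa_le.
elim: S => [|S IH]; first by rewrite expr0 mul1r.
have -> : nfg_sarah gam g pi x0 S.+1 = epoch gam g (pi S) (nfg_sarah gam g pi x0 S) by [].
case E: (nfg_sarah gam g pi x0 S) => [X V]; rewrite E in IH.
apply: le_trans (contract (pi S) X V) _.
set k := 1 - gam * (n%:R + 1) * mu in IH *.
rewrite exprS -[k * _ * _]mulrA; apply: ler_wpM2l => //; rewrite /k; lra.
Qed.

Lemma gap_le_Phi xv : favg f xv.1 - favg f xstar <= Phi xv.
Proof.
rewrite /Phi lerDl; apply: mulr_ge0; last exact: sqr_ge0.
have hg0 := gam_pos hn hL0 hgam.
apply: mulr_ge0; first lra.
by apply: mulr_ge0; [apply: ltW | rewrite addr_ge0 ?ler0n].
Qed.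

End Contract.


Lemma mu_le_2L (R : realType) (d n : nat) (f : 'I_n -> 'rV[R]_d -> R)
  (g : 'I_n -> 'rV[R]_d -> 'rV[R]_d) (L mu : R) :
  (0 < d)%N -> (0 < n)%N -> 0 < mu ->
  L_smooth g L -> strongly_convex f g mu -> mu <= 2 * L.
Proof.
move=> hd hn hmu hL hsc.
set y : 'rV[R]_d := const_mx 1.
have h1 := favg_SC hn 0 y hsc.
have h2 := favg_up hn 0 y (ltW hmu) hsc hL.
have hr : 0 < enorm (y - 0) ^+ 2.
  rewrite subr0 enorm_sq /dotv.
  under eq_bigr do rewrite !mxE mulr1.
  by rewrite sumr_const card_ord -[1 *+ d]mulr_natl mulr1 ltr0n.
set r := enorm (y - 0) ^+ 2 in h1 h2 hr.
have : mu / 2 * r <= L * r by lra.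
move=> h; have : (mu / 2 - L) * r <= 0 by rewrite mulrBl; lra.
rewrite pmulr_lle0 //; lra.
Qed.

Theorem theorem4 :
  exists C : nat,
  forall (R : realType) (d n : nat) (f : 'I_n -> 'rV[R]_d -> R)
         (g : 'I_n -> 'rV[R]_d -> 'rV[R]_d) (L mu : R)
         (x0 xstar : 'rV[R]_d),
    (0 < n)%N -> 0 < L -> 0 < mu ->
    is_gradient f g -> L_smooth g L -> strongly_convex f g mu ->
    (forall x, favg f xstar <= favg f x) ->
    let gamma := (20 * L * (n%:R + 1))^-1 in
    exists Delta : R, 0 < Delta /\
    forall (eps : R) (pi : nat -> {perm 'I_n}) (S : nat), 0 < eps ->
      let gap := favg f (nfg_sarah gamma g pi x0 S.+1).1 - favg f xstar in
      let bound := C%:R * (n%:R * L / mu) * ln (Delta / eps) in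
      ((iterations n S)%:R >= bound -> gap <= eps) /\
      ((oracle_calls n S)%:R >= bound -> gap <= eps).
Proof.
exists 40%N.
move=> R d n f g L mu x0 xstar hn hL0 hmu0 _ hL hsc hmin gam.
have hgam : gam = (20 * L * (n%:R + 1))^-1 by [].
clearbody gam.
have [d0|dpos] := eqVneq d 0%N.
  subst d; exists 1; split; first lra.
  move=> eps pi S heps; cbv zeta.
  have hx : forall u v : 'rV[R]_0, u = v by move=> u v; rewrite (thinmx0 u) (thinmx0 v).
  rewrite (hx (nfg_sarah gam g pi x0 S.+1).1 xstar) subrr; split => _; exact: ltW.
have hd : (0 < d)%N by rewrite lt0n.
have hmu2 := mu_le_2L hd hn hmu0 hL hsc.
set Phi0 := Phi f g gam xstar (x0, 0).
have hP0 : 0 <= Phi0.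
  have := gap_le_Phi f g xstar hn hL0 hgam (x0, 0); have := hmin x0; rewrite /Phi0 /=; lra.
exists (Phi0 + 1); split; first lra.
move=> eps pi S heps; cbv zeta.
have hLg := Lgam hn hL0 hgam.
have hg0 := gam_pos hn hL0 hgam.
have hnR : 0 < (n%:R : R) by rewrite ltr0n.
set nR := (n%:R : R) in hLg hgam *.
set kap := gam * (nR + 1) * mu.
have hkap0 : 0 < kap by rewrite /kap; apply: mulr_gt0 => //; apply: mulr_gt0 => //; lra.
have hkap1 : kap <= 1 / 10 by exact: kappa_le hn hL0 hmu2 hgam.
set Del := Phi0 + 1.
have hDel : 0 < Del by rewrite /Del; lra.
set ell := ln (Del / eps).
set s := (S.+1)%:R : R.
have hs : 0 < s by rewrite ltr0n.
have key : ell <= kap * s ->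
    favg f (nfg_sarah gam g pi x0 S.+1).1 - favg f xstar <= eps.
  move=> hl.
  apply: le_trans (gap_le_Phi f g xstar hn hL0 hgam _) _.
  apply: le_trans (iter_bound hn hL0 hmu0 hmu2 hL hsc hmin hgam x0 pi S.+1) _.
  rewrite -/nR -/kap -/Phi0.
  have hpow0 : 0 <= (1 - kap) ^+ S.+1 by apply: exprn_ge0; lra.
  have e1 : (1 - kap) ^+ S.+1 <= expR (- kap) ^+ S.+1.
    apply: lerXn2r; rewrite ?nnegrE; [lra | exact: ltW (expR_gt0 _) |].
    by have := expR_ge1Dx (- kap); lra.
  have e2 : expR (- kap) ^+ S.+1 = expR (s * - kap) by rewrite expRM_natl.
  have e3 : expR (s * - kap) <= expR (- ell) by rewrite ler_expR; lra.
  have e4 : expR (- ell) = eps / Del.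
    by rewrite expRN /ell lnK ?posrE ?divr_gt0 // invf_div.
  have : (1 - kap) ^+ S.+1 <= eps / Del by rewrite -e4; apply: le_trans e3; rewrite -e2.
  move=> hp.
  apply: le_trans (_ : (1 - kap) ^+ S.+1 * Del <= _).
    by rewrite ler_wpM2l // /Del; lra.
  apply: le_trans (ler_wpM2r (ltW hDel) hp) _.
  by rewrite divfK ?lt0r_neq0.
have hid : 40%:R * (nR * L / mu) * ell * kap = nR * (2 * ell).
  have -> : 40%:R * (nR * L / mu) * ell * kap = 40 * nR * ell * (L * gam * (nR + 1)).
    by rewrite /kap; field; rewrite lt0r_neq0.
  by rewrite hLg; field.
split => hb; apply: key.
- have := ler_wpM2r (ltW hkap0) hb.
  rewrite hid /iterations natrM -/s -/nR.
  have -> : s * nR * kap = nR * (s * kap) by ring.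
  rewrite ler_pM2l //.
  have : 0 <= s * kap by apply: mulr_ge0; lra.
  move=> h1 h2; rewrite mulrC; lra.
- have := ler_wpM2r (ltW hkap0) hb.
  rewrite hid /oracle_calls natrM natrM -/s -/nR.
  have -> : 2%:R * (s * nR) * kap = nR * (2 * (s * kap)) by ring.
  rewrite ler_pM2l //.
  move=> h2; rewrite mulrC; lra.
Qed.
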